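(* Let $H$ be a $3$-graph with $s$ vertices, let $t\geq 1$, and let $G$ be a $3$-graph that is $H\sqcup S_{2,t}$-free. Let $v\in V(G)$. If $G-\{v\}$ contains a copy of $H$, then $\omega(G_v)\leq s+t$.
   Context: A $3$-graph $G$ is $F$-free if it contains no subgraph isomorphic to $F$. $S_{2,t}$ is the $3$-graph with vertex set $\{w_1,w_2,u_1,\dots,u_t\}$ and edge set $\{w_1w_2u_1,\dots,w_1w_2u_t\}$. $\sqcup$ denotes vertex-disjoint union. For $S\subseteq V(G)$, $G-S$ is the subgraph of $G$ induced by $V(G)\setminus S$. The link graph of $v$ is the $2$-graph $G_v=\{ab: vab\in E(G)\}$, and $\omega(\cdot)$ denotes the order of a maximum clique of a $2$-graph. *)

(* Defs.v *)
From mathcomp Require Import all_boot.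
Set Implicit Arguments. Unset Strict Implicit. Unset Printing Implicit Defensive.

Definition is3graph (T : finType) (E : {set {set T}}) : Prop :=
  forall e, e \in E -> #|e| = 3.

Definition embeds (U T : finType) (EF : {set {set U}}) (EG : {set {set T}})
  (f : U -> T) : Prop :=
  injective f /\ forall e, e \in EF -> f @: e \in EG.

Definition contains (U T : finType) (EG : {set {set T}}) (EF : {set {set U}}) : Prop :=
  exists f : U -> T, embeds EF EG f.

Definition Ffree (U T : finType) (EG : {set {set T}}) (EF : {set {set U}}) : Prop :=
  ~ contains EG EF.

(* S_{2,t} on 'I_(t+2): w1 = 0, w2 = 1, u_i = i+1 (i = 1..t); edges w1 w2 u_i. *)
Definition S2t (t : nat) : {set {set 'I_t.+2}} :=
  [set [set ord0; inord 1; j] | j in [set j : 'I_t.+2 | 1 < j]].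

Definition disj_union (U V : finType) (EH : {set {set U}}) (EF : {set {set V}})
  : {set {set (U + V)%type}} :=
  [set (@inl U V) @: e | e : {set U} in EH] :|: [set (@inr U V) @: e | e : {set V} in EF].

Definition deleteV (T : finType) (EG : {set {set T}}) (S : {set T})
  : {set {set {x : T | x \notin S}}} :=
  [set e : {set {x : T | x \notin S}} | (val @: e) \in EG].

Definition link (T : finType) (EG : {set {set T}}) (v : T) : rel T :=
  fun a b => [set v; a; b] \in EG.

Definition is_clique (T : finType) (r : rel T) (K : {set T}) : bool :=
  [forall a in K, forall b in K, (a != b) ==> r a b].

Definition omega (T : finType) (r : rel T) : nat :=
  \max_(K : {set T} | is_clique r K) #|K|.

(* Main.v *)
Require Import Defs.
From mathcomp Require Import all_boot zify.

Theorem claim3p5 (U T : finType) (EH : {set {set U}}) (s t : nat)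
  (EG : {set {set T}}) (v : T) :
  is3graph EH -> #|U| = s -> 1 <= t ->
  is3graph EG ->
  Ffree EG (disj_union EH (S2t t)) ->
  contains (deleteV EG [set v]) EH ->
  omega (link EG v) <= s + t.
Proof.
move=> _ Us t1 G3 Hfree [f [finj fE]].
apply/bigmax_leqP => K Kcl; rewrite leqNgt; apply/negP => Kbig.
have clP : forall a b, a \in K -> b \in K -> a != b -> [set v; a; b] \in EG.
  move=> a b aK bK ab.
  by move/forallP: Kcl => /(_ a); rewrite aK => /forallP /(_ b); rewrite bK /= => /implyP /(_ ab).
have vK : v \notin K.
  apply/negP => vK.
  have : 1 < #|K| by apply: leq_ltn_trans Kbig; rewrite -addn1; apply: leq_add; rewrite ?leq0n.
  rewrite (cardsD1 v K) vK add1n ltnS => /card_gt0P [b]; rewrite !inE => /andP [bv bK].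
  have := G3 _ (clP _ _ vK bK (ltac:(by rewrite eq_sym))).
  have : #|[set v; v; b]| <= 2.
    rewrite (_ : [set v; v; b] = [set v; b]) ?cards2; first by case: (v == b).
    by apply/setP => x; rewrite !inE; case: (x == v).
  by move=> + E; rewrite E.
pose S := [set val (f x) | x in U].
pose B := K :\: S.
have SU : #|S| <= s by rewrite -Us; exact: leq_imset_card.
have Bbig : t < #|B|.
  rewrite /B cardsD.
  have : #|K :&: S| <= s by apply: leq_trans SU; rewrite subset_leq_card // subsetIr.
  move: Kbig; clear; lia.
pose g (j : 'I_t.+2) : T := if val j == 0 then v else nth v (enum B) (val j).-1.
have gB : forall j : 'I_t.+2, val j != 0 -> g j \in B.
  move=> j j0; rewrite /g (negbTE j0) -mem_enum; apply: mem_nth.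
  rewrite -cardE -subn1; have : val j < t.+2 := ltn_ord j; move: j0 Bbig; clear; lia.
have BK : forall x, x \in B -> x \in K by move=> x; rewrite inE => /andP [].
have gv : forall j : 'I_t.+2, val j != 0 -> g j != v.
  by move=> j /gB /BK xK; apply/eqP => E; move: xK; rewrite E (negbTE vK).
have ginj : injective g.
  move=> j1 j2 E; apply: val_inj.
  have [e1|n1] := eqVneq (val j1) 0; have [e2|n2] := eqVneq (val j2) 0.
  - by rewrite e1 e2.
  - by move: (gv _ n2); rewrite -E /g e1 !eqxx.
  - by move: (gv _ n1); rewrite E /g e2 !eqxx.
  - move: E; rewrite /g (negbTE n1) (negbTE n2) => /eqP.
    have jl1 : val j1 < t.+2 := ltn_ord j1.
    have jl2 : val j2 < t.+2 := ltn_ord j2.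
    rewrite nth_uniq ?enum_uniq -?cardE -?subn1 //.
    + by move/eqP; move: n1 n2; clear -jl1 jl2; lia.
    + by move: n1 Bbig jl1; clear; lia.
    + by move: n2 Bbig jl2; clear; lia.
pose h (z : U + 'I_t.+2) : T := match z with inl x => val (f x) | inr j => g j end.
case: Hfree; exists h; split.
  have hS : forall x j, val (f x) != g j.
    move=> x j; have [e|n] := eqVneq (val j) 0.
      by rewrite /g e eqxx; have := valP (f x); rewrite inE.
    have := gB j n; rewrite inE => /andP [nS _]; apply/eqP => E; move: nS.
    by rewrite -E /S (imset_f (fun y => val (f y))) ?inE.
  case=> [x1|j1]; case=> [x2|j2] /= E.
  - by congr inl; apply: finj; apply: val_inj.
  - by case/negP: (hS x1 j2); apply/eqP; exact: E.
  - by case/negP: (hS x2 j1); apply/eqP; exact: (esym E).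
  - by congr inr; apply: ginj.
move=> e; rewrite inE => /orP [] /imsetP [e' e'E ->].
  have := fE _ e'E; rewrite inE -!imset_comp.
  by rewrite (@eq_imset _ _ (h \o inl) (val \o f)).
case/imsetP: e'E => j; rewrite inE => jgt ->.
rewrite -imset_comp (@eq_imset _ _ (h \o inr) g) //.
rewrite !imsetU !imset_set1.
have i1 : val (inord 1 : 'I_t.+2) = 1 by apply: inordK; move: t1; clear; lia.
have g0 : g ord0 = v by [].
rewrite g0; apply: clP; try (apply: BK; apply: gB); rewrite ?i1 //.
  by have : 1 < val j := jgt; case: (val j).
apply/eqP => /ginj /(congr1 val); rewrite i1 => E.
by have : 1 < val j := jgt; rewrite -E.
Qed.
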